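(* Let $n\ge2$ and $0\le r_l\le r_u<1$. For all $x,y\in\mathbb{B}^n$ with $r_l\le|x|\le|y|\le r_u$, $$\frac{1+r_l}{2}\,\mathrm{th}\frac{\rho_{\mathbb{B}^n}(x,y)}{2}\le p_{\mathbb{B}^n}(x,y)\le\frac{1+r_u^2}{2\sqrt{1-2r_u+2r_u^2}}\,\mathrm{th}\frac{\rho_{\mathbb{B}^n}(x,y)}{2},$$ and these are the best possible constants depending only on $r_l$ and $r_u$.
   Context: $\mathbb{B}^n$ is the unit ball of $\mathbb{R}^n$. For a domain $G\subsetneq\mathbb{R}^n$ and $x\in G$, $d_G(x)=\inf\{|x-z|:z\in\partial G\}$. The hyperbolic metric of the unit ball satisfies $\mathrm{th}\frac{\rho_{\mathbb{B}^n}(x,y)}{2}=\frac{|x-y|}{\sqrt{|x-y|^2+(1-|x|^2)(1-|y|^2)}}$. The point pair function is $p_G(x,y)=\frac{|x-y|}{\sqrt{|x-y|^2+4d_G(x)d_G(y)}}$. *)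

(* Defs.v *)
From HB Require Import structures.
From mathcomp Require Import all_boot all_order all_algebra.
From mathcomp Require Import all_classical all_reals.
Set Implicit Arguments. Unset Strict Implicit. Unset Printing Implicit Defensive.
Import Order.TTheory GRing.Theory Num.Theory.
Local Open Scope ring_scope.
Local Open Scope classical_set_scope.

Definition enorm (R : realType) (n : nat) (x : 'rV[R]_n) : R :=
  Num.sqrt (\sum_(i < n) x ord0 i ^+ 2).

Definition unit_ball (R : realType) (n : nat) : set 'rV[R]_n :=
  [set x | enorm x < 1].
Definition unit_sphere (R : realType) (n : nat) : set 'rV[R]_n :=
  [set z | enorm z = 1].

Definition dB (R : realType) (n : nat) (x : 'rV[R]_n) : R :=
  inf [set enorm (x - z) | z in @unit_sphere R n].

(* th (rho_{B^n}(x,y)/2), by the formula given in the paper *)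
Definition th_rho_half (R : realType) (n : nat) (x y : 'rV[R]_n) : R :=
  enorm (x - y) /
  Num.sqrt (enorm (x - y) ^+ 2 + (1 - enorm x ^+ 2) * (1 - enorm y ^+ 2)).

Definition pB (R : realType) (n : nat) (x y : 'rV[R]_n) : R :=
  enorm (x - y) / Num.sqrt (enorm (x - y) ^+ 2 + 4 * dB x * dB y).

(* Main.v *)
Require Import Defs.
From HB Require Import structures.
From mathcomp Require Import all_boot all_order all_algebra.
From mathcomp Require Import all_classical all_reals.
From mathcomp Require Import ring lra.
Import Order.TTheory GRing.Theory Num.Theory.
Local Open Scope ring_scope.
Local Open Scope classical_set_scope.
Set Implicit Arguments. Unset Strict Implicit.
Definition Dn (R : realFieldType) (x y : R) := (2 - x - y)^+2 + 4*x*y.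
Lemma mono (R : realFieldType) (a A b : R) : 0 <= a -> a <= A -> A <= 1 -> 0 <= b -> b <= 1 ->
  (1 + a*b)^+2 * Dn A b <= (1 + A*b)^+2 * Dn a b.
Proof.
move=> a0 aA A1 b0 b1; rewrite /Dn.
rewrite -subr_ge0.
have -> : (1 + A*b)^+2 * ((2 - a - b)^+2 + 4*a*b) - (1 + a*b)^+2 * ((2 - A - b)^+2 + 4*A*b)
  = (A-a)*(1-b)*((1-a)*(1-b)*(1+2*b-b^+2) + (1-A)*(1-b)*(1+2*b-b^+2) + 2*b*(1+3*b)*(1-a*A) + 2*(1-b)*(1+b)^+2) by ring.
have h1 : 0 <= 1 + 2*b - b^+2 by nra.
have h2 : 0 <= 1 - a*A by nra.
apply: mulr_ge0; first (apply: mulr_ge0; lra).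
repeat apply: addr_ge0; repeat apply: mulr_ge0; lra.
Qed.
Lemma DnC (R : realFieldType) (x y : R) : Dn x y = Dn y x.
Proof. rewrite /Dn; ring. Qed.
Lemma Dn_gt0 (R : realFieldType) (x y : R) : 0 <= x -> x < 1 -> 0 <= y -> y < 1 -> 0 < Dn x y.
Proof. move=> *; rewrite /Dn; nra. Qed.
Lemma chain (R : realFieldType) (X1 X2 X3 D1 D2 D3 : R) : 0 < D1 -> 0 < D2 -> 0 < D3 ->
  X1 * D2 <= X2 * D1 -> X2 * D3 <= X3 * D2 -> X1 * D3 <= X3 * D1.
Proof.
move=> p1 p2 p3 h1 h2.
have : X1 * D3 * D2 <= X3 * D1 * D2.
  have e1 : X1 * D3 * D2 = (X1 * D2) * D3 by ring.
  have e2 : X3 * D1 * D2 = (X3 * D2) * D1 by ring.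
  rewrite e1 e2.
  have k1 := ler_wpM2r (ltW p3) h1. have k2 := ler_wpM2r (ltW p1) h2. simpl in k1, k2.
  rewrite (_ : X2 * D1 * D3 = (X2 * D3) * D1) in k1; last by ring.
  exact: le_trans k1 k2.
by rewrite ler_pM2r.
Qed.
Lemma key (R : realFieldType) (a b r : R) : 0 <= a -> a <= r -> 0 <= b -> b <= r -> r < 1 ->
  4 * (1 - 2*r + 2*r^+2) * (1 + a*b)^+2 <= (1 + r^+2)^+2 * Dn a b.
Proof.
move=> a0 ar b0 br r1.
have r0 : 0 <= r by lra.
have m1 := mono a0 ar (ltW r1) b0 (le_trans br (ltW r1)).
have m2 := mono b0 br (ltW r1) r0 (ltW r1).
rewrite (mulrC b r) (DnC b r) in m2.
have := chain (Dn_gt0 a0 (le_lt_trans ar r1) b0 (le_lt_trans br r1))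
   (Dn_gt0 r0 r1 b0 (le_lt_trans br r1)) (Dn_gt0 r0 r1 r0 r1) m1 m2.
have -> : Dn r r = 4 * (1 - 2*r + 2*r^+2) by rewrite /Dn; ring.
move=> h; rewrite -[r * r]expr2 in h; lra.
Qed.
Section Vec.
Variables (R : realType) (n : nat).
Implicit Types x y z : 'rV[R]_n.

Definition dot x y : R := \sum_(i < n) x ord0 i * y ord0 i.

Lemma dot_ge0 x : 0 <= dot x x.
Proof. by apply: sumr_ge0 => i _; rewrite -expr2 sqr_ge0. Qed.

Lemma enorm_ge0 x : 0 <= enorm x.
Proof. exact: sqrtr_ge0. Qed.

Lemma enorm_sq x : enorm x ^+ 2 = dot x x.
Proof.
rewrite /enorm sqr_sqrtr; last by apply: sumr_ge0 => i _; rewrite sqr_ge0.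
by apply: eq_bigr => i _; rewrite expr2.
Qed.

Lemma dotC x y : dot x y = dot y x.
Proof. by apply: eq_bigr => i _; rewrite mulrC. Qed.

Lemma quad x y (s t : R) :
  \sum_(i < n) (s * x ord0 i + t * y ord0 i) ^+ 2
  = s ^+ 2 * dot x x + 2 * s * t * dot x y + t ^+ 2 * dot y y.
Proof.
rewrite /dot !mulr_sumr -!big_split /=; apply: eq_bigr => i _; ring.
Qed.

Lemma dotB x y : dot (x - y) (x - y) = dot x x - 2 * dot x y + dot y y.
Proof.
rewrite /dot !mulr_sumr -sumrB -big_split /=; apply: eq_bigr => i _.
rewrite !mxE; ring.
Qed.

Lemma dot0 x y : dot x x = 0 -> dot x y = 0.
Proof.
move=> h.
have hx : forall i, x ord0 i = 0.
  move=> i.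
  have h' : \sum_(j < n) x ord0 j ^+ 2 = 0.
    by apply: etrans h; apply: eq_bigr => j _; rewrite expr2.
  have : x ord0 i ^+ 2 = 0.
    by apply: (psumr_eq0P (P := xpredT) (fun j _ => sqr_ge0 (x ord0 j)) h').
  by move/eqP; rewrite sqrf_eq0 => /eqP.
by rewrite /dot big1 // => i _; rewrite hx mul0r.
Qed.

Lemma cs x y : `|dot x y| <= enorm x * enorm y.
Proof.
have ha := enorm_ge0 x; have hb := enorm_ge0 y.
have ea := enorm_sq x; have eb := enorm_sq y.
have [a0|apos] := eqVneq (enorm x) 0.
  rewrite a0 expr0n /= in ea.
  by rewrite dot0 // a0 mul0r normr0.
have [b0|bpos] := eqVneq (enorm y) 0.
  rewrite b0 expr0n /= in eb.
  by rewrite dotC dot0 // b0 mulr0 normr0.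
have q1 := quad x y (enorm y) (enorm x).
have q2 := quad x y (enorm y) (- enorm x).
have s1 : 0 <= \sum_(i < n) (enorm y * x ord0 i + enorm x * y ord0 i) ^+ 2
  by apply: sumr_ge0 => i _; rewrite sqr_ge0.
have s2 : 0 <= \sum_(i < n) (enorm y * x ord0 i + - enorm x * y ord0 i) ^+ 2
  by apply: sumr_ge0 => i _; rewrite sqr_ge0.
rewrite q1 -ea -eb in s1; rewrite q2 -ea -eb in s2.
have ap : 0 < enorm x by rewrite lt_def apos.
have bp : 0 < enorm y by rewrite lt_def bpos.
have abp : 0 < enorm x * enorm y by rewrite mulr_gt0.
rewrite ler_norml; apply/andP; split; nra.
Qed.


Lemma enormZ x (c : R) : enorm (c *: x) = `|c| * enorm x.
Proof.
rewrite /enorm -sqrtr_sqr -sqrtrM ?sqr_ge0 //; congr Num.sqrt.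
by rewrite mulr_sumr; apply: eq_bigr => i _; rewrite mxE exprMn.
Qed.

Lemma enorm0 x : enorm x = 0 -> x = 0.
Proof.
move=> h. have e := enorm_sq x. rewrite h expr0n /= in e.
apply/rowP => i; rewrite mxE.
have h' : \sum_(j < n) x ord0 j ^+ 2 = 0.
  by apply: etrans (esym e); apply: eq_bigr => j _; rewrite expr2.
have : x ord0 i ^+ 2 = 0.
  by apply: (psumr_eq0P (P := xpredT) (fun j _ => sqr_ge0 (x ord0 j)) h').
by move/eqP; rewrite sqrf_eq0 => /eqP.
Qed.

Lemma enormN x : enorm (- x) = enorm x.
Proof. by rewrite -scaleN1r enormZ normrN1 mul1r. Qed.

End Vec.

Definition vec2 (R : realType) (n : nat) (p q : R) : 'rV[R]_n :=
  \row_(j < n) (if (val j == 0)%N then p else if (val j == 1)%N then q else 0).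

Lemma vec2B (R : realType) (n : nat) (p q p' q' : R) :
  vec2 n p q - vec2 n p' q' = vec2 n (p - p') (q - q').
Proof.
apply/rowP => j; rewrite !mxE.
by case: ifP => _; [|case: ifP => _]; rewrite ?subrr.
Qed.

Lemma enorm_vec2 (R : realType) (n : nat) (p q : R) : (2 <= n)%N ->
  enorm (vec2 n p q) = Num.sqrt (p ^+ 2 + q ^+ 2).
Proof.
case: n => [|[|m]] // _; rewrite /enorm; congr Num.sqrt.
rewrite big_ord_recl big_ord_recl big1 ?addr0 => [|i _]; rewrite !mxE //=.
by rewrite expr0n.
Qed.

Lemma dist_lb (R : realType) (n : nat) (x z : 'rV[R]_n) :
  enorm z = 1 -> enorm x <= 1 -> 1 - enorm x <= enorm (x - z).
Proof.
move=> hz hx.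
have e := enorm_sq (x - z). rewrite dotB -!enorm_sq hz in e.
have c := cs x z. rewrite hz mulr1 in c.
have c' : dot x z <= enorm x := le_trans (ler_norm _) c.
have ha := enorm_ge0 x; have hd := enorm_ge0 (x - z).
nra.
Qed.

Lemma dB_eq (R : realType) (n : nat) (x : 'rV[R]_n) : (2 <= n)%N ->
  enorm x < 1 -> dB x = 1 - enorm x.
Proof.
move=> hn hx.
set E := [set enorm (x - z) | z in @unit_sphere R n].
have lb : lbound E (1 - enorm x).
  by move=> _ [z hz <-]; apply: dist_lb => //; exact: ltW.
have inE : E (1 - enorm x).
  have [a0|apos] := eqVneq (enorm x) 0.
    rewrite a0 /E; have -> : x = 0 by exact: enorm0.
    exists (vec2 n 1 0).
      by rewrite /unit_sphere /= enorm_vec2 // expr0n /= addr0 expr1n sqrtr1.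
    by rewrite sub0r enormN enorm_vec2 // expr0n /= addr0 expr1n sqrtr1 subr0.
  have ap : 0 < enorm x by rewrite lt_def apos enorm_ge0.
  exists ((enorm x)^-1 *: x).
    by rewrite /unit_sphere /= enormZ ger0_norm ?invr_ge0 ?enorm_ge0 // mulVf.
  rewrite -{1}(scale1r x) -scalerBl enormZ ler0_norm; last first.
    by rewrite subr_le0 invf_ge1 // ltW.
  by rewrite opprB mulrBl mulVf // mul1r.
apply/eqP; rewrite eq_le; apply/andP; split.
  exact: (ge_inf (ex_intro _ _ lb) inE).
by apply: lb_le_inf => //; exists (1 - enorm x).
Qed.

Lemma diffE (R : realType) (c d sP sT : R) : 0 < sP -> 0 < sT ->
  c * (d / sT) - d / sP = d * (c * sP - sT) / (sT * sP).
Proof. move=> hp ht; field; apply/andP; split; rewrite gt_eqF //. Qed.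

Lemma L1 (R : realType) (c d P T : R) : 0 <= d -> 0 < P -> 0 < T -> 0 <= c ->
  c ^+ 2 * P <= T -> c * (d / Num.sqrt T) <= d / Num.sqrt P.
Proof.
move=> hd hP hT hc h.
have sP : 0 < Num.sqrt P by rewrite sqrtr_gt0.
have sT : 0 < Num.sqrt T by rewrite sqrtr_gt0.
have eP := sqr_sqrtr (ltW hP); have eT := sqr_sqrtr (ltW hT).
have eu : (c * Num.sqrt P) ^+ 2 = c ^+ 2 * P by rewrite exprMn eP.
have u0 : 0 <= c * Num.sqrt P by rewrite mulr_ge0 // ltW.
have k : c * Num.sqrt P <= Num.sqrt T.
  by move: (c * Num.sqrt P) eu u0 => u eu u0; nra.
rewrite -subr_le0 diffE // pmulr_lle0 ?invr_gt0 ?mulr_gt0 //.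
by apply: mulr_ge0_le0 => //; rewrite subr_le0.
Qed.

Lemma L2 (R : realType) (c d P T : R) : 0 <= d -> 0 < P -> 0 < T -> 0 <= c ->
  T <= c ^+ 2 * P -> d / Num.sqrt P <= c * (d / Num.sqrt T).
Proof.
move=> hd hP hT hc h.
have sP : 0 < Num.sqrt P by rewrite sqrtr_gt0.
have sT : 0 < Num.sqrt T by rewrite sqrtr_gt0.
have eP := sqr_sqrtr (ltW hP); have eT := sqr_sqrtr (ltW hT).
have eu : (c * Num.sqrt P) ^+ 2 = c ^+ 2 * P by rewrite exprMn eP.
have u0 : 0 <= c * Num.sqrt P by rewrite mulr_ge0 // ltW.
have k : Num.sqrt T <= c * Num.sqrt P.
  by move: (c * Num.sqrt P) eu u0 => u eu u0; nra.
rewrite -subr_ge0 diffE // pmulr_lge0 ?invr_gt0 ?mulr_gt0 //.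
by apply: mulr_ge0 => //; rewrite subr_ge0.
Qed.

Lemma L3 (R : realType) (c d P T : R) : 0 < d -> 0 < P -> 0 < T -> 0 <= c ->
  T < c ^+ 2 * P -> d / Num.sqrt P < c * (d / Num.sqrt T).
Proof.
move=> hd hP hT hc h.
have sP : 0 < Num.sqrt P by rewrite sqrtr_gt0.
have sT : 0 < Num.sqrt T by rewrite sqrtr_gt0.
have eP := sqr_sqrtr (ltW hP); have eT := sqr_sqrtr (ltW hT).
have eu : (c * Num.sqrt P) ^+ 2 = c ^+ 2 * P by rewrite exprMn eP.
have u0 : 0 <= c * Num.sqrt P by rewrite mulr_ge0 // ltW.
have k : Num.sqrt T < c * Num.sqrt P.
  by move: (c * Num.sqrt P) eu u0 => u eu u0; nra.
rewrite -subr_gt0 diffE // pmulr_lgt0 ?invr_gt0 ?mulr_gt0 //.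
by rewrite subr_gt0.
Qed.

Lemma pB_eq (R : realType) (n : nat) (x y : 'rV[R]_n) : (2 <= n)%N ->
  enorm x < 1 -> enorm y < 1 ->
  pB x y = enorm (x - y) / Num.sqrt (enorm (x - y) ^+ 2 + 4 * (1 - enorm x) * (1 - enorm y)).
Proof. by move=> hn hx hy; rewrite /pB !dB_eq. Qed.

Lemma dot_lb (R : realType) (n : nat) (x y : 'rV[R]_n) :
  enorm (x - y) ^+ 2 <= (enorm x + enorm y) ^+ 2.
Proof.
rewrite enorm_sq dotB -!enorm_sq.
have := cs x y; rewrite ler_norml => /andP [h1 h2].
have := enorm_ge0 x; have := enorm_ge0 y. nra.
Qed.

Lemma in_ball (R : realType) (n : nat) (x : 'rV[R]_n) : (x \in @unit_ball R n) = (enorm x < 1).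
Proof. by apply/idP/idP => h; [exact: (set_mem h) | exact: (mem_set (h : unit_ball x))]. Qed.

Theorem theorem3p4 (R : realType) (n : nat) (rl ru : R) :
  (2 <= n)%N -> 0 <= rl -> rl <= ru -> ru < 1 ->
  let lo := (1 + rl) / 2 in
  let up := (1 + ru ^+ 2) / (2 * Num.sqrt (1 - 2 * ru + 2 * ru ^+ 2)) in
  let adm := fun x y : 'rV[R]_n =>
    [/\ x \in @unit_ball R n, y \in @unit_ball R n,
        rl <= enorm x, enorm x <= enorm y & enorm y <= ru] in
  (forall x y : 'rV[R]_n, adm x y ->
     lo * th_rho_half x y <= pB x y /\ pB x y <= up * th_rho_half x y) /\
  (0 < ru ->
     (forall c : R, lo < c ->
        exists x y : 'rV[R]_n, [/\ adm x y, x != y & pB x y < c * th_rho_half x y]) /\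
     (forall c : R, c < up ->
        exists x y : 'rV[R]_n, [/\ adm x y, x != y & c * th_rho_half x y < pB x y])).
Proof.
move=> hn rl0 rlu ru1 lo up adm.
have Q0 : 0 < 1 - 2 * ru + 2 * ru ^+ 2 by nra.
have up0 : 0 <= up.
  by rewrite /up divr_ge0 // ?mulr_ge0 ?sqrtr_ge0 //; nra.
have eup : up ^+ 2 = (1 + ru ^+ 2) ^+ 2 / (4 * (1 - 2 * ru + 2 * ru ^+ 2)).
  by rewrite /up expr_div_n exprMn sqr_sqrtr ?(ltW Q0) // -[2 ^+ 2]/(2 * 2); congr (_ / (_ * _)); ring.
split.
  move=> x y; rewrite /adm !in_ball => -[hx hy hrx hxy hyr].
  rewrite pB_eq // /th_rho_half.
  have ha := enorm_ge0 x; have hb := enorm_ge0 y; have hd := enorm_ge0 (x - y).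
  have dl := dot_lb x y.
  move: (enorm x) (enorm y) (enorm (x - y)) ha hb hd dl hx hy hrx hxy hyr => a b d ha hb hd dl hx hy hrx hxy hyr.
  have P0 : 0 < d ^+ 2 + 4 * (1 - a) * (1 - b) by nra.
  have u1 : 0 < 1 - a ^+ 2 by nra.
  have u2 : 0 < 1 - b ^+ 2 by nra.
  have T0 : 0 < d ^+ 2 + (1 - a ^+ 2) * (1 - b ^+ 2).
    by apply: ltr_wpDl; [exact: sqr_ge0 | exact: mulr_gt0].
  split.
    apply: L1 => //; first by rewrite /lo; lra.
    have e : lo ^+ 2 = (1 + rl) ^+ 2 / 4 by rewrite /lo expr_div_n; congr (_ / _); ring.
    rewrite e.
    have k1 : (1 + rl) ^+ 2 <= (1 + a) * (1 + b) by nra.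
    have k2 : (1 + rl) ^+ 2 <= 4 by nra.
    have k3 : (1 + rl) ^+ 2 * d ^+ 2 <= 4 * d ^+ 2 by apply: ler_wpM2r => //; exact: sqr_ge0.
    have k4 : (1 + rl) ^+ 2 * ((1 - a) * (1 - b)) <= ((1 + a) * (1 + b)) * ((1 - a) * (1 - b)).
      by apply: ler_wpM2r => //; apply: mulr_ge0; lra.
    lra.
  apply: L2 => //.
  rewrite eup mulrAC ler_pdivlMr; last by nra.
  have k := key ha (le_trans hxy hyr) hb hyr ru1.
  rewrite /Dn in k.
  have F0 : (1 + ru ^+ 2) ^+ 2 - 4 * (1 - 2 * ru + 2 * ru ^+ 2) = - ((1 - ru) ^+ 3 * (3 + ru)) by ring.
  have F1 : 0 <= (1 - ru) ^+ 3 * (3 + ru) by apply: mulr_ge0; [apply: exprn_ge0|]; lra.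
  have G : 0 <= ((1 - ru) ^+ 3 * (3 + ru)) * ((a + b) ^+ 2 - d ^+ 2) by apply: mulr_ge0 => //; lra.
  nra.
move=> ru0; split.
  move=> c hc.
  have c0 : 0 < c by rewrite /lo in hc; lra.
  set w := 1 - ru. set dl := 2 * c - (1 + rl).
  have w0 : 0 < w by rewrite /w; lra.
  have dl0 : 0 < dl by rewrite /dl; rewrite /lo in hc; lra.
  set m := Num.min dl c.
  have m0 : 0 < m by rewrite /m lt_min dl0 c0.
  have m1 : m <= dl by rewrite /m ge_min lexx.
  have m2 : m <= c by rewrite /m ge_min lexx orbT.
  set s := Num.min ru (w * m / 4).
  have s0 : 0 < s by rewrite /s lt_min ru0 /=; apply: divr_gt0 => //; apply: mulr_gt0.
  have s1 : s <= ru by rewrite /s ge_min lexx.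
  have s2 : s <= w * m / 4 by rewrite /s ge_min lexx orbT.
  set r := Num.max rl s.
  have r1 : rl <= r by rewrite /r le_max lexx.
  have r2 : s <= r by rewrite /r le_max lexx orbT.
  have r3 : r <= ru by rewrite /r ge_max rlu s1.
  have r4 : r <= rl + s by rewrite /r ge_max; apply/andP; split; lra.
  set al := Num.sqrt (r ^+ 2 - s ^+ 2).
  have eal : al ^+ 2 = r ^+ 2 - s ^+ 2 by rewrite /al sqr_sqrtr //; nra.
  have ex : enorm (vec2 n al (- s)) = r.
    by rewrite enorm_vec2 // eal sqrrN subrK sqrtr_sqr ger0_norm //; lra.
  have ey : enorm (vec2 n al s) = r.
    by rewrite enorm_vec2 // eal subrK sqrtr_sqr ger0_norm //; lra.
  have exy : enorm (vec2 n al (- s) - vec2 n al s) = 2 * s.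
    rewrite vec2B enorm_vec2 // subrr (_ : 0 ^+ 2 + (- s - s) ^+ 2 = (2 * s) ^+ 2); last by ring.
    by rewrite sqrtr_sqr ger0_norm //; lra.
  exists (vec2 n al (- s)), (vec2 n al s); split.
  - by rewrite /adm !in_ball ex ey; split => //; lra.
  - apply/eqP => e.
    have := congr1 (fun M : 'rV[R]_n => M ord0 (Ordinal hn)) e.
    rewrite /= !mxE /=; lra.
  have rlt1 : r < 1 by lra.
  rewrite pB_eq ?ex ?ey //.
  rewrite /th_rho_half ex ey exy.
  have s2p : 0 < (2 * s) ^+ 2 by apply: exprn_gt0; lra.
  have q1 : 0 <= 4 * (1 - r) * (1 - r) by rewrite -mulrA mulr_ge0 // -expr2 sqr_ge0.
  have q2 : 0 <= (1 - r ^+ 2) * (1 - r ^+ 2) by rewrite -expr2 sqr_ge0.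
  apply: L3; [lra|lra|lra|lra|].
  have h1 : 1 + r <= 2 * c - dl / 2.
    have : w * m / 4 <= dl / 4 by rewrite /w; nra.
    rewrite /dl; lra.
  have h2 : dl * c <= 4 * c ^+ 2 - (1 + r) ^+ 2.
    have : dl / 2 <= 2 * c - (1 + r) by lra.
    have : 2 * c <= 2 * c + (1 + r) by lra.
    nra.
  have h3 : w ^+ 2 <= (1 - r) ^+ 2 by rewrite /w; nra.
  have h4 : m ^+ 2 <= dl * c by nra.
  have h5 : s ^+ 2 <= w ^+ 2 * m ^+ 2 / 16.
    have : s ^+ 2 <= (w * m / 4) ^+ 2 by nra.
    by rewrite expr_div_n exprMn (_ : 4 ^+ 2 = 16 :> R) //; ring.
  have h6 : w ^+ 2 * (dl * c) <= (1 - r) ^+ 2 * (4 * c ^+ 2 - (1 + r) ^+ 2).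
    apply: ler_pM => //; [exact: sqr_ge0 | nra].
  have h7 : w ^+ 2 * m ^+ 2 <= w ^+ 2 * (dl * c) by apply: ler_wpM2l => //; exact: sqr_ge0.
  have h8 : 0 < w ^+ 2 * (dl * c) by apply: mulr_gt0; [apply: exprn_gt0|apply: mulr_gt0].
  have h9 : 0 <= s ^+ 2 * c ^+ 2 by apply: mulr_ge0; exact: sqr_ge0.
  have E : c ^+ 2 * ((2 * s) ^+ 2 + 4 * (1 - r) * (1 - r)) - ((2 * s) ^+ 2 + (1 - r ^+ 2) * (1 - r ^+ 2))
     = 4 * (s ^+ 2 * c ^+ 2) - 4 * s ^+ 2 + (1 - r) ^+ 2 * (4 * c ^+ 2 - (1 + r) ^+ 2) by ring.
  rewrite -subr_gt0 E.
  lra.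
move=> c hc.
have ex : enorm (vec2 n (- ru) 0) = ru.
  by rewrite enorm_vec2 // expr0n addr0 sqrrN sqrtr_sqr ger0_norm //; lra.
have ey : enorm (vec2 n ru 0) = ru.
  by rewrite enorm_vec2 // expr0n addr0 sqrtr_sqr ger0_norm //; lra.
have exy : enorm (vec2 n (- ru) 0 - vec2 n ru 0) = 2 * ru.
  rewrite vec2B enorm_vec2 // subrr expr0n addr0 (_ : (- ru - ru) ^+ 2 = (2 * ru) ^+ 2); last by ring.
  by rewrite sqrtr_sqr ger0_norm //; lra.
exists (vec2 n (- ru) 0), (vec2 n ru 0); split.
- by rewrite /adm !in_ball ex ey; split => //; lra.
- apply/eqP => e.
  have := congr1 (fun M : 'rV[R]_n => M ord0 (Ordinal (ltn_trans (ltnSn 0) hn))) e.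
  rewrite /= !mxE /=; lra.
rewrite pB_eq ?ex ?ey //.
rewrite /th_rho_half ex ey exy.
set th := 2 * ru / _.
have th0 : 0 < th by rewrite /th divr_gt0 ?mulr_gt0 // sqrtr_gt0; nra.
apply: (lt_le_trans (y := up * th)); first by rewrite ltr_pM2r.
apply: L1 => //; [lra|nra|nra|].
rewrite eup mulrAC ler_pdivrMr //.
have -> : (2 * ru) ^+ 2 + 4 * (1 - ru) * (1 - ru) = 4 * (1 - 2 * ru + 2 * ru ^+ 2) by ring.
have -> : (2 * ru) ^+ 2 + (1 - ru ^+ 2) * (1 - ru ^+ 2) = (1 + ru ^+ 2) ^+ 2 by ring.
by []. 
lra.
Qed.
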